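(* Let $P$ be a finite graded bowtie-free poset of rank $n$ with $\hat0,\hat1$ and a good $\mathcal{H}_n(0)$ action $U_1,\dots,U_{n-1}$, and let $S\subseteq[n-1]$. Then every chain of $P$ whose elements other than $\hat0,\hat1$ have rank set exactly $S$ extends to exactly one maximal chain of $P$ whose descent set is contained in $S$.
   Context: Bowtie-free: no distinct $a,b,c,d$ with $a$ and $b$ each covering both $c$ and $d$. A good $\mathcal{H}_n(0)$ action is a family $U_1,\dots,U_{n-1}$ of maps on the set $\mathcal{M}(P)$ of maximal chains with: (1) $U_i(\mathfrak m)$ agrees with $\mathfrak m$ except possibly at rank $i$; (2) $U_i^2=U_i$; (3) $U_iU_j=U_jU_i$ for $|i-j|\ge2$; (4) $U_iU_{i+1}U_i=U_{i+1}U_iU_{i+1}$; (5) $\omega F_P(x)=\mathrm{ch}(\chi_P)$, where $\chi_P$ is the character of the representation of the 0-Hecke algebra $\mathcal{H}_n(0)$ on $\mathbb{C}\mathcal{M}(P)$ with $T_i$ acting as $-U_i$; $F_P(x)=\sum x_1^{\mathrm{rk}(t_0,t_1)}\cdots x_k^{\mathrm{rk}(t_{k-1},t_k)}$ over multichains $\hat0=t_0\le\cdots\le t_{k-1}<t_k=\hat1$; $L_{S,n}=\sum_{1\le i_1\le\cdots\le i_n,\ i_j<i_{j+1}\ (j\in S)}x_{i_1}\cdots x_{i_n}$; $\omega(L_{S,n})=L_{[n-1]\setminus S,n}$; $\mathrm{ch}$ linear with $\mathrm{ch}(\chi_S)=L_{S,n}$ for $\chi_S$ the character of the one-dimensional representation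 $T_i\mapsto-1$ ($i\in S$), $T_i\mapsto0$ ($i\notin S$). The descent set of a maximal chain $\mathfrak m$ is $\{i\in[n-1]:U_i(\mathfrak m)\ne\mathfrak m\}$. *)

(* Defs.v *)
From mathcomp Require Import all_boot all_order all_algebra.
Set Implicit Arguments. Unset Strict Implicit. Unset Printing Implicit Defensive.
Import Order.TTheory GRing.Theory.

Section Poset.
Local Open Scope order_scope.
Context {disp : Order.disp_t} {P : finTBPOrderType disp}.

Definition covers (x y : P) : bool :=
  (x < y) && ~~ [exists z : P, (x < z) && (z < y)].

Definition graded_rank (rk : P -> nat) (n : nat) : Prop :=
  [/\ rk \bot = 0%N, rk \top = n & forall x y, covers x y -> rk y = (rk x).+1].

Definition bowtie_free : Prop :=
  ~ exists a b c d : P,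
      [/\ uniq [:: a; b; c; d],
          covers c a, covers d a, covers c b & covers d b].

Definition chainb (c : {set P}) : bool :=
  [forall x in c, forall y in c, (x <= y) || (y <= x)].

Definition maxchainb (m : {set P}) : bool :=
  chainb m && [forall x, (x \notin m) ==> ~~ chainb (x |: m)].

Definition maxchains : {set {set P}} := [set m | maxchainb m].

(* coefficient of the monomial x_1^{a_1} ... x_k^{a_k} (k = size a) in F_P:
   number of multichains 0hat = t_0 <= ... <= t_{k-1} < t_k = 1hat with
   rk(t_{i-1},t_i) = a_i. *)
Definition F_coef (rk : P -> nat) (a : seq nat) : nat :=
  #|[set t : {ffun 'I_(size a).+1 -> P} |
     [&& 0 < size a,
         t ord0 == \bot,
         t ord_max == \top,
         [forall i : 'I_(size a),
            (t (widen_ord (leqnSn _) i) <= t (lift ord0 i)) &&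
            (rk (t (lift ord0 i)) == rk (t (widen_ord (leqnSn _) i)) + nth 0 a i)%N] &
         (t (inord (size a).-1) < t ord_max)]]|.

(* Descent set of a maximal chain, as a subset of [n-1] (elements of 'I_n
   with positive value). *)
Definition descents (n : nat) (U : nat -> {set P} -> {set P}) (m : {set P})
  : {set 'I_n} := [set i : 'I_n | (0 < val i)%N && (U (val i) m != m)].

Definition rankset (n : nat) (rk : P -> nat) (c : {set P}) : {set 'I_n} :=
  [set i : 'I_n | [exists x in c, [&& x != \bot, x != \top & rk x == val i]]].

End Poset.

(* [n-1] as a subset of 'I_n *)
Definition posI (n : nat) : {set 'I_n} := [set i : 'I_n | 0 < val i].

(* coefficient of x_1^{a_1}...x_k^{a_k} in the fundamental quasisymmetric
   function L_{S,n}: number of weakly increasing i_1 <= ... <= i_n with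
   i_j < i_{j+1} for j in S, having exponent vector a (values i_j - 1 are
   encoded in 'I_k). *)
Definition L_coef (n : nat) (S : {set 'I_n}) (a : seq nat) : nat :=
  #|[set f : {ffun 'I_n -> 'I_(size a)} |
     [&& [forall i : 'I_n, forall j : 'I_n, (i <= j)%N ==> (f i <= f j)%N],
         [forall i : 'I_n, forall j : 'I_n,
            ((val j == (val i).+1) && (j \in S)) ==> (f i < f j)%N] &
         [forall v : 'I_(size a), #|[set j | f j == v]| == nth 0 a v]]]|.

(* omega on degree n: L_{S,n} |-> L_{[n-1] \ S, n} *)
Definition L_compl (n : nat) (S : {set 'I_n}) : {set 'I_n} := posI n :\: S.

(* the one-dimensional character chi_S evaluated at T_{w_1} ... T_{w_k}:
   T_i |-> -1 if i in S, 0 otherwise *)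
Definition chiS (n : nat) (S : {set 'I_n}) (w : seq nat) : int :=
  \prod_(i <- w) (if [exists j in S, val j == i] then (-1)%R else 0%R).

Section Action.
Local Open Scope order_scope.
Context {disp : Order.disp_t} {P : finTBPOrderType disp}.

(* U_w = U_{w_1} o ... o U_{w_k}, the action of T_{w_1}...T_{w_k} up to sign *)
Definition Uword (U : nat -> {set P} -> {set P}) (w : seq nat) :=
  foldr (fun i f => U i \o f) id w.

(* the character chi_P of H_n(0) on C M(P) (T_i acting as -U_i), evaluated at
   T_{w_1} ... T_{w_k}: the trace on the basis M(P). *)
Definition chiP (U : nat -> {set P} -> {set P}) (w : seq nat) : int :=
  ((-1) ^+ size w * (Posz #|[set m in (maxchains : {set {set P}}) | Uword U w m == m]|))%R.

Definition good_action (n : nat) (rk : P -> nat)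
  (U : nat -> {set P} -> {set P}) : Prop :=
  [/\ [/\
      forall i m, (0 < i < n)%N -> maxchainb m -> maxchainb (U i m),
      forall i m x, (0 < i < n)%N -> maxchainb m -> rk x != i ->
        (x \in U i m) = (x \in m),
      forall i m, (0 < i < n)%N -> maxchainb m -> U i (U i m) = U i m,
      forall i j m, (0 < i < n)%N -> (0 < j < n)%N ->
        ((i.+2 <= j)%N || (j.+2 <= i)%N) -> maxchainb m ->
        U i (U j m) = U j (U i m) &
      forall i m, (0 < i)%N -> (i.+1 < n)%N -> maxchainb m ->
        U i (U i.+1 (U i m)) = U i.+1 (U i (U i.+1 m))] &
      (* (5)  omega F_P = ch(chi_P):
         chi_P = sum_S c_S chi_S (as functions on H_n(0), checked on the
         spanning words T_{w_1}...T_{w_k}), so ch(chi_P) = sum_S c_S L_{S,n};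
         F_P = sum_S d_S L_{S,n}, so omega F_P = sum_S d_S L_{[n-1]\S,n};
         equality of power series is coefficientwise on monomials
         x_1^{a_1}...x_k^{a_k} (a = [::] or last a <> 0). *)
      exists (c d : {set 'I_n} -> int),
        [/\ forall w : seq nat, all (fun i => (0 < i < n)%N) w ->
              chiP U w = (\sum_(S : {set 'I_n} | S \subset posI n) c S * chiS S w)%R,
            forall a : seq nat, last 1%N a != 0%N ->
              (Posz (F_coef rk a)) =
              (\sum_(S : {set 'I_n} | S \subset posI n) d S * (Posz (L_coef S a)))%R &
            forall a : seq nat, last 1%N a != 0%N ->
              (\sum_(S : {set 'I_n} | S \subset posI n) d S * (Posz (L_coef (L_compl S) a)))%R =
              (\sum_(S : {set 'I_n} | S \subset posI n) c S * (Posz (L_coef S a)))%R]].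

End Action.

(* Main.v *)
Require Import Defs.
From mathcomp Require Import all_boot all_order all_algebra zify.
Set Implicit Arguments. Unset Strict Implicit. Unset Printing Implicit Defensive.
Import Order.TTheory GRing.Theory.

Section PosetFacts.
Local Open Scope order_scope.
Context {disp : Order.disp_t} {P : finTBPOrderType disp}.
Variables (n : nat) (rk : P -> nat).
Hypothesis Hgr : graded_rank rk n.

Lemma rk_lt (x y : P) : x < y -> (rk x < rk y)%N.
Proof.
case: Hgr => _ _ Hc.
move: {2}#|[set z | x < z & z < y]| (leqnn #|[set z : P | x < z & z < y]|) => N.
elim: N x y => [|N IH] x y HN xy.
  case Hcv: (covers x y); first by rewrite (Hc _ _ Hcv).
  move: Hcv; rewrite /covers xy /= => /negbFE/existsP [z /andP [xz zy]].
  by move: HN; rewrite leqn0 => /eqP/cards0_eq/setP/(_ z); rewrite !inE xz zy.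
case Hcv: (covers x y); first by rewrite (Hc _ _ Hcv).
move: Hcv; rewrite /covers xy /= => /negbFE/existsP [z /andP [xz zy]].
have H1 : (#|[set w : P | (x < w)%O & (w < z)%O]| <= N)%N.
  rewrite -ltnS; apply: leq_trans HN; apply: proper_card; apply/properP; split.
    by apply/subsetP => w; rewrite !inE => /andP [-> wz]; rewrite (lt_trans wz zy).
  by exists z; rewrite !inE ?ltxx ?xz ?zy // andbF.
have H2 : (#|[set w : P | (z < w)%O & (w < y)%O]| <= N)%N.
  rewrite -ltnS; apply: leq_trans HN; apply: proper_card; apply/properP; split.
    by apply/subsetP => w; rewrite !inE => /andP [zw ->]; rewrite (lt_trans xz zw).
  by exists z; rewrite !inE ?ltxx ?xz ?zy.
exact: ltn_trans (IH _ _ H1 xz) (IH _ _ H2 zy).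
Qed.

Lemma rk_le (x y : P) : x <= y -> (rk x <= rk y)%N.
Proof. by rewrite le_eqVlt => /orP [/eqP -> //| /rk_lt /ltnW]. Qed.

Lemma rk_bound (x : P) : (rk x <= n)%N.
Proof. by case: Hgr => _ <- _; apply: rk_le; apply: lex1. Qed.

Lemma chain_rk_inj (m : {set P}) x y : chainb m -> x \in m -> y \in m ->
  rk x = rk y -> x = y.
Proof.
move=> /forallP Hm xm ym Hr.
move: (Hm x); rewrite xm /= => /forallP /(_ y); rewrite ym /= => /orP [] H;
  move: H; rewrite le_eqVlt => /orP [/eqP //|/rk_lt]; rewrite Hr ltnn //.
Qed.

Lemma chain_le_rk (m : {set P}) x y : chainb m -> x \in m -> y \in m ->
  (rk x <= rk y)%N -> x <= y.
Proof.
move=> /forallP Hm xm ym Hr.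
move: (Hm x); rewrite xm /= => /forallP /(_ y); rewrite ym /= => /orP [//|H].
move: H; rewrite le_eqVlt => /orP [/eqP -> //|/rk_lt]; rewrite ltnNge Hr //.
Qed.

Lemma maxchain_mem (m : {set P}) x : maxchainb m ->
  (forall y, y \in m -> (x <= y) || (y <= x)) -> x \in m.
Proof.
case/andP => Hc /forallP Hmax Hx; apply: contraT => xm.
have := Hmax x; rewrite xm /= => /negP H; case: H; apply/forallP => a; apply/implyP.
move=> /setU1P [->|am]; apply/forallP => b; apply/implyP;
  move=> /setU1P [->|bm].
- by rewrite lexx.
- exact: Hx.
- by rewrite orbC Hx.
- by move/forallP: Hc => /(_ a); rewrite am => /forallP /(_ b); rewrite bm.
Qed.

Lemma maxchain_bot (m : {set P}) : maxchainb m -> \bot \in m.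
Proof. by move=> Hm; apply: maxchain_mem => // y _; rewrite le0x. Qed.

Lemma maxchain_top (m : {set P}) : maxchainb m -> \top \in m.
Proof. by move=> Hm; apply: maxchain_mem => // y _; rewrite lex1 orbT. Qed.

Lemma maxchain_rank (m : {set P}) r : maxchainb m -> (r <= n)%N ->
  exists2 x, x \in m & rk x = r.
Proof.
move=> Hm; have Hc : chainb m by case/andP: Hm.
elim: r => [|r IH] Hr.
  by exists \bot; [apply: maxchain_bot | case: Hgr].
case: (IH (ltnW Hr)) => x xm rx.
have Hy : [exists y in m, x < y].
  apply/existsP; exists \top; rewrite maxchain_top //= lt_neqAle lex1 andbT.
  by apply/eqP => Ex; move: Hr; rewrite -rx Ex; case: Hgr => _ -> _; rewrite ltnn.
pose y := [arg min_(y < \top | (y \in m) && (x < y)) rk y].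
have [y0 /andP [y0m xy0] Hy0] : extremum_spec leq (fun y => (y \in m) && (x < y)) rk y.
  apply: arg_minnP; rewrite maxchain_top //= lt_neqAle lex1 andbT.
  by apply/eqP => Ex; move: Hr; rewrite -rx Ex; case: Hgr => _ -> _; rewrite ltnn.
case Hcv: (covers x y0).
  by exists y0 => //; case: Hgr => _ _ /(_ _ _ Hcv) ->; rewrite rx.
exfalso; move: Hcv; rewrite /covers xy0 /= => /negbFE/existsP [z /andP [xz zy]].
have zm : z \in m.
  apply: maxchain_mem => // w wm.
  have := Hc; move/forallP => /(_ x); rewrite xm => /forallP /(_ w); rewrite wm /=.
  case/orP => [xw|wx]; last by rewrite (le_trans wx (ltW xz)) orbT.
  move: xw; rewrite le_eqVlt => /orP [/eqP <-|xw]; first by rewrite (ltW xz) orbT.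
  have := Hy0 w; rewrite wm xw => /(_ isT) Hle.
  have := Hc; move/forallP => /(_ y0); rewrite y0m => /forallP /(_ w); rewrite wm /=.
  case/orP => [yw|wy]; first by rewrite (le_trans (ltW zy) yw).
  move: wy; rewrite le_eqVlt => /orP [/eqP ->|/rk_lt]; first by rewrite (ltW zy).
  by rewrite ltnNge Hle.
have := Hy0 z; rewrite zm xz => /(_ isT); rewrite leqNgt (rk_lt zy) //.
Qed.

Definition elt (m : {set P}) r := odflt \bot [pick x in m | rk x == r].

Lemma eltP (m : {set P}) r : maxchainb m -> (r <= n)%N ->
  elt m r \in m /\ rk (elt m r) = r.
Proof.
move=> Hm Hr; rewrite /elt; case: pickP => [x /andP [xm /eqP ->] //|H].
by case: (maxchain_rank Hm Hr) => x xm rx; move: (H x); rewrite xm rx eqxx.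
Qed.

Lemma elt_eq (m : {set P}) x : maxchainb m -> x \in m -> elt m (rk x) = x.
Proof.
move=> Hm xm; case: (eltP Hm (rk_bound x)) => em er.
by apply: (chain_rk_inj (m := m)) => //; case/andP: Hm.
Qed.

Lemma extend_chain (c : {set P}) : chainb c -> exists m, maxchainb m && (c \subset m).
Proof.
move=> Hc.
have [m /andP [Hm cm] Hmax] := @arg_maxnP _ c (fun m : {set P} => chainb m && (c \subset m)) (fun m => #|m|) (introT andP (conj Hc (subxx c))).
exists m; rewrite cm andbT /maxchainb Hm /=; apply/forallP => x; apply/implyP => xm.
apply/negP => Hx; have := Hmax (x |: m); rewrite Hx (subset_trans cm (subsetUr _ _)) => /(_ isT).
by rewrite cardsU1 xm add1n /geq /= ltnn.
Qed.

End PosetFacts.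

Section Hecke.
Context {disp : Order.disp_t} {P : finTBPOrderType disp}.
Variables (n : nat) (U : nat -> {set P} -> {set P}).
Let D := fun m : {set P} => maxchainb m.
Hypothesis H1 : forall i m, (0 < i < n)%N -> D m -> D (U i m).
Hypothesis H2 : forall i m, (0 < i < n)%N -> D m -> U i (U i m) = U i m.
Hypothesis H3 : forall i j m, (0 < i < n)%N -> (0 < j < n)%N ->
        ((i.+2 <= j)%N || (j.+2 <= i)%N) -> D m ->
        U i (U j m) = U j (U i m).
Hypothesis H4 : forall i m, (0 < i)%N -> (i.+1 < n)%N -> D m ->
        U i (U i.+1 (U i m)) = U i.+1 (U i (U i.+1 m)).

Lemma Uword_cons i w x : Uword U (i :: w) x = U i (Uword U w x).
Proof. by []. Qed.

Lemma Uword_cat w1 w2 x : Uword U (w1 ++ w2) x = Uword U w1 (Uword U w2 x).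
Proof. by elim: w1 => //= i w1 IH; rewrite /Uword /= -/(Uword U _) /= IH. Qed.

Lemma Uword_D w x : all (fun i => (0 < i < n)%N) w -> D x -> D (Uword U w x).
Proof.
elim: w => //= i w IH /andP [Hi Hw] Dx; rewrite -/(Uword U _).
exact: H1 Hi (IH Hw Dx).
Qed.

Lemma comm_word j w x : (0 < j < n)%N ->
  all (fun l => (0 < l < n)%N && ((j.+2 <= l)%N || (l.+2 <= j)%N)) w -> D x ->
  U j (Uword U w x) = Uword U w (U j x).
Proof.
move=> Hj; elim: w => //= l w IH /andP [/andP [Hl Hjl] Hw] Dx.
rewrite -!/(Uword U _) /= -IH //; apply: H3 => //.
apply: Uword_D => //; apply/allP => y /(allP Hw) /andP [] //.
Qed.

Lemma iota_bounds a l : (0 < a)%N -> (a + l <= n)%N ->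
  all (fun i => (0 < i < n)%N) (iota a l).
Proof.
move=> Ha Hl; apply/allP => i; rewrite mem_iota => /andP [ai il].
by rewrite (leq_trans Ha ai) /= (leq_trans il Hl).
Qed.

Lemma shift l : forall a i x, (0 < a)%N -> (a + l <= n)%N -> (a < i < a + l)%N ->
  D x -> U i (Uword U (iota a l) x) = Uword U (iota a l) (U i.-1 x).
Proof.
elim: l => [|l IH] a i x Ha Hl Hi Dx.
  by move: Hi; rewrite addn0 => /andP [H1' H2']; move: (ltn_trans H1' H2'); rewrite ltnn.
rewrite /= -!/(Uword U _).
have Hin : (0 < i < n)%N.
  case/andP: Hi => ai il; rewrite (ltn_trans Ha ai) /=; exact: leq_trans il Hl.
have Han : (0 < a < n)%N.
  by rewrite Ha /=; apply: leq_trans Hl; rewrite addnS ltnS leq_addr.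
case/andP: (Hi) => ai il.
case: (ltngtP i a.+1) => [|Hia|Hia].
- by rewrite ltnS leqNgt ai.
- have DW : D (Uword U (iota a.+1 l) x).
    by apply: Uword_D => //; apply: iota_bounds => //; rewrite addSnnS.
  rewrite (H3 Hin Han _ DW); last by rewrite Hia orbT.
  rewrite IH //; first by rewrite addSn -addnS.
  by rewrite Hia /= addSn -addnS.
- subst i; clear Hi Hin; case: l IH Hl il => [|l] IH Hl il.
    by move: il; rewrite addn1 ltnn.
  rewrite /= -!/(Uword U _).
  have Hbnd : all (fun i => (0 < i < n)%N) (iota a.+2 l).
    by apply: iota_bounds => //; move: Hl; rewrite !addSn !addnS.
  have Ha1 : (a.+1 < n)%N by lia.
  have Dy : D (Uword U (iota a.+2 l) x) by apply: Uword_D.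
  rewrite -H4 // comm_word //.
  apply/allP => y; rewrite mem_iota => /andP [ay yl].
  apply/andP; split; first by apply/andP; split; lia.
  by apply/orP; left.
Qed.

Lemma absorb a l x : (0 < a)%N -> (a + l.+1 <= n)%N -> D x ->
  U a (Uword U (iota a l.+1) x) = Uword U (iota a l.+1) x.
Proof.
move=> Ha Hl Dx; rewrite /= -!/(Uword U _) H2 //.
  by rewrite Ha; apply: leq_trans Hl; rewrite addnS ltnS leq_addr.
by apply: Uword_D => //; apply: iota_bounds => //; rewrite addSnnS.
Qed.

Variable inJ : nat -> bool.
Hypothesis inJ_bnd : forall j, inJ j -> (0 < j < n)%N.

Fixpoint st k := if k is k'.+1 then (if inJ k' then st k' else k) else 0.

Fixpoint W k := if k is k'.+1 then
  (if inJ k then iota (st k) (k.+1 - st k) ++ W k' else W k') else [::].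

Lemma WS k : W k.+1 = if inJ k.+1 then iota (st k.+1) (k.+2 - st k.+1) ++ W k else W k.
Proof. by []. Qed.

Lemma st_prop k : inJ k ->
  [/\ (0 < st k <= k)%N, (forall i, (st k <= i <= k)%N -> inJ i) & ~~ inJ (st k).-1].
Proof.
elim: k => [|k IH] Hk; first by move: (inJ_bnd Hk).
rewrite /=; case Hk': (inJ k).
- have [/andP [H0 Hl] Hr Hn] := IH Hk'; split => //.
  + by apply/andP; split; lia.
  + move=> i /andP [si ik]; case: (ltngtP i k.+1) => [Hi||->] //.
      by apply: Hr; rewrite si -ltnS.
    by rewrite ltnNge ik.
- split; [by rewrite leqnn | | by rewrite Hk'].
  by move=> i; rewrite -eqn_leq => /eqP <-.
Qed.

Lemma W_letters k : all inJ (W k).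
Proof.
elim: k => // k IH; rewrite WS; case Hk: (inJ k.+1) => //; rewrite all_cat IH andbT.
have [/andP [H0 Hl] Hr _] := st_prop Hk.
apply/allP => i; rewrite mem_iota => /andP [si ik]; apply: Hr.
apply/andP; split => //; lia.
Qed.

Lemma W_all k j : inJ j -> (j <= k)%N -> j \in W k.
Proof.
elim: k => [|k IH] Hj jk; first by move: jk (inJ_bnd Hj); rewrite leqn0 => /eqP ->.
rewrite WS; case Hk: (inJ k.+1).
  rewrite mem_cat; case: (ltngtP j k.+1) => [Hl|Hg|->].
  + by rewrite IH ?orbT.
  + by move: jk; rewrite leqNgt Hg.
  + have [/andP [H0 Hl] _ _] := st_prop Hk.
    rewrite mem_iota; apply/orP; left; apply/andP; split => //; lia.
case: (ltngtP j k.+1) => [Hl|Hg|Ej].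
+ by rewrite IH.
+ by move: jk; rewrite leqNgt Hg.
+ by move: Hj; rewrite Ej Hk.
Qed.

Lemma W_bounds k : all (fun i => (0 < i < n)%N) (W k).
Proof. by apply/allP => i /(allP (W_letters k)) /inJ_bnd. Qed.

Lemma W_absorb k : forall i x, inJ i -> (i <= k)%N -> D x ->
  U i (Uword U (W k) x) = Uword U (W k) x.
Proof.
elim: k => [|k IH] i x Hi ik Dx; first by move: ik (inJ_bnd Hi); rewrite leqn0 => /eqP ->.
rewrite WS; case Hk: (inJ k.+1); last first.
  apply: IH => //; case: (ltngtP i k.+1) => // [Hg|Ei]; first by move: ik; rewrite leqNgt Hg.
  by move: Hi; rewrite Ei Hk.
have [/andP [H0 Hl] Hr Hn] := st_prop Hk.
set a := st k.+1 in H0 Hl Hr Hn *.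
have Hkn : (k.+1 < n)%N by case/andP: (inJ_bnd Hk).
have DW : D (Uword U (W k) x) by apply: Uword_D => //; apply: W_bounds.
rewrite Uword_cat.
case: (ltngtP i a) => [Hia|Hia|Hia].
-
  have Hi2 : (i.+2 <= a)%N.
    rewrite ltn_neqAle Hia andbT; apply/eqP => E; move: Hn; rewrite -E /= Hi //.
  rewrite comm_word //; first by rewrite IH //; lia.
  + exact: inJ_bnd.
  + apply/allP => y; rewrite mem_iota => /andP [ay yl].
    apply/andP; split; first by apply/andP; split; lia.
    by apply/orP; left; lia.
- rewrite shift //; try lia.
  rewrite IH //; last by lia.
  by apply: Hr; apply/andP; split; lia.
- rewrite Hia; have -> : (k.+2 - a = (k.+1 - a).+1)%N by lia.
  apply: absorb => //; lia.
Qed.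

End Hecke.

Section Comb.
Variable n : nat.
Implicit Types R : {set 'I_n}.

Definition cnt (R : {set 'I_n}) (j : nat) := #|[set r in R | (val r <= j)%N]|.
Definition inS (R : {set 'I_n}) (j : nat) := [exists r in R, val r == j].
Definition rcomp (R : {set 'I_n}) : seq nat :=
  [seq #|[set j : 'I_n | cnt R j == v]| | v <- iota 0 (#|R|.+1)].

Lemma size_comp R : size (rcomp R) = #|R|.+1.
Proof. by rewrite size_map size_iota. Qed.

Lemma nth_comp R v : (v < #|R|.+1)%N -> nth 0 (rcomp R) v = #|[set j : 'I_n | cnt R j == v]|.
Proof. by move=> Hv; rewrite (nth_map 0) ?size_iota // nth_iota. Qed.

Lemma cnt_le R j : (cnt R j <= #|R|)%N.
Proof. by apply: subset_leq_card; apply/subsetP => r; rewrite inE => /andP []. Qed.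

Lemma cnt_mono R i j : (i <= j)%N -> (cnt R i <= cnt R j)%N.
Proof.
move=> ij; apply: subset_leq_card; apply/subsetP => r; rewrite !inE => /andP [-> ri].
exact: leq_trans ri ij.
Qed.

Lemma cntS R j : cnt R j.+1 = (cnt R j + inS R j.+1)%N.
Proof.
rewrite /cnt /inS.
case: existsP => [[r /andP [rR /eqP rj]]|Hn].
  have -> : [set r0 in R | (val r0 <= j.+1)%N] = r |: [set r0 in R | (val r0 <= j)%N].
    apply/setP => x; rewrite !inE; case: (eqVneq x r) => [->|xr] /=.
      by rewrite rR rj leqnn.
    case: (x \in R) => //=; rewrite leq_eqVlt ltnS; case: (eqVneq (val x) j.+1) => //= Ex.
    by case/eqP: xr; apply: val_inj; rewrite /= Ex rj.
  by rewrite cardsU1 inE rj ltnn andbF addn1.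
rewrite addn0; apply: eq_card => x; rewrite !inE; case xR: (x \in R) => //=.
rewrite leq_eqVlt ltnS; case: (eqVneq (val x) j.+1) => //= Ex.
by case: Hn; exists x; rewrite xR /= Ex.
Qed.

Lemma inS_val R (j : 'I_n) : inS R j = (j \in R).
Proof.
apply/existsP/idP => [[r /andP [rR /eqP rj]]|jR]; last by exists j; rewrite jR eqxx.
by have -> : j = r by apply: val_inj.
Qed.

Lemma cnt0 R : R \subset posI n -> cnt R 0 = 0.
Proof.
move=> /subsetP HR; apply/eqP; rewrite cards_eq0; apply/eqP/setP => r; rewrite !inE.
case rR: (r \in R) => //=; move: (HR r rR); rewrite inE.
by case: r rR => r Hr /= _; lia.
Qed.

Lemma cnt_last R : (0 < n)%N -> cnt R n.-1 = #|R|.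
Proof.
move=> Hn; apply: eq_card => r; rewrite !inE; case: (r \in R) => //=.
by case: r => r /= Hr; lia.
Qed.

Lemma last_comp R : (0 < n)%N -> last 1%N (rcomp R) != 0%N.
Proof.
move=> Hn; rewrite -nth_last size_comp /= (set_nth_default 0) ?size_comp //.
have Hn1 : (n.-1 < n)%N by lia.
rewrite nth_comp // -lt0n; apply/card_gt0P; exists (Ordinal Hn1).
by rewrite inE /= cnt_last.
Qed.


Lemma card_prefix k : (k <= n)%N -> #|[set i : 'I_n | (val i < k)%N]| = k.
Proof.
elim: k => [|k IH] Hk.
  by apply/eqP; rewrite cards_eq0; apply/eqP/setP => i; rewrite !inE.
have Hk' : (k < n)%N by [].
rewrite (_ : [set i : 'I_n | (val i < k.+1)%N] = Ordinal Hk' |: [set i : 'I_n | (val i < k)%N]).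
  by rewrite cardsU1 inE /= ltnn IH ?(ltnW Hk) // add1n.
apply/setP => i; rewrite !inE ltnS leq_eqVlt; congr (_ || _).
Qed.

Lemma downset (g : 'I_n -> nat) :
  (forall i j : 'I_n, (val i <= val j)%N -> (g i <= g j)%N) ->
  forall j v, (g j < v)%N = (val j < #|[set i | (g i < v)%N]|)%N.
Proof.
move=> Hg j v; apply/idP/idP => [Hj|].
  have E : #|[set i : 'I_n | (val i < (val j).+1)%N]| = (val j).+1.
    by apply: card_prefix; apply: ltn_ord.
  apply: (@leq_trans #|[set i : 'I_n | (val i < (val j).+1)%N]|); first by rewrite E.
  apply: subset_leq_card; apply/subsetP => i; rewrite !inE ltnS => ij.
  exact: leq_ltn_trans (Hg _ _ ij) Hj.
apply: contraTT; rewrite -leqNgt => Hj; rewrite -leqNgt.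
have E : #|[set i : 'I_n | (val i < val j)%N]| = val j.
  by apply: card_prefix; apply: ltnW; apply: ltn_ord.
apply: (@leq_trans #|[set i : 'I_n | (val i < val j)%N]|); last by rewrite E.
apply: subset_leq_card.
apply/subsetP => i; rewrite !inE; apply: contraTT; rewrite -!leqNgt => ji.
exact: leq_trans Hj (Hg _ _ ji).
Qed.

Lemma card_split (g : 'I_n -> nat) v :
  #|[set j | (g j < v.+1)%N]| = (#|[set j | (g j < v)%N]| + #|[set j | g j == v]|)%N.
Proof.
rewrite -cardsUI.
have -> : [set j | (g j < v)%N] :&: [set j | g j == v] = set0.
  by apply/setP => j; rewrite !inE; case: (ltngtP (g j) v).
rewrite cards0 addn0; apply: eq_card => j; rewrite !inE ltnS leq_eqVlt orbC.
by [].
Qed.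

Lemma L_comp (V R : {set 'I_n}) : (0 < n)%N -> V \subset posI n -> R \subset posI n ->
  L_coef V (rcomp R) = (V \subset R).
Proof.
move=> Hn HV HR.
have cntlt : forall j : 'I_n, (cnt R j < size (rcomp R))%N.
  by move=> j; rewrite size_comp ltnS cnt_le.
pose F0 : {ffun 'I_n -> 'I_(size (rcomp R))} := [ffun j => Ordinal (cntlt j)].
rewrite /L_coef; set A := (X in #|X|).
have fib0 : forall v, (v < size (rcomp R))%N ->
    #|[set j : 'I_n | cnt R j == v]| = nth 0 (rcomp R) v.
  by move=> v; rewrite size_comp => Hv; rewrite nth_comp.
have key : forall f, f \in A -> f = F0.
  move=> f; rewrite inE => /and3P [/forallP Hm _ /forallP Hf].
  have Hmono : forall i j : 'I_n, (val i <= val j)%N -> (f i <= f j)%N.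
    by move=> i j ij; move: (Hm i) => /forallP /(_ j) /implyP; apply.
  have Hc : forall v, #|[set j : 'I_n | (f j < v)%N]| = #|[set j : 'I_n | (cnt R j < v)%N]|.
    elim=> [|v IH].
      by apply: eq_card => j; rewrite !inE !ltn0.
    rewrite !card_split IH; congr (_ + _)%N.
    case: (ltnP v (size (rcomp R))) => Hv.
      rewrite fib0 //; move: (Hf (Ordinal Hv)) => /eqP <-.
      by apply: eq_card => j; rewrite !inE.
    have E1 : [set j : 'I_n | f j == v :> nat] = set0.
      apply/setP => j; rewrite !inE; apply/negP => /eqP E.
      by move: (ltn_ord (f j)); rewrite E ltnNge Hv.
    have E2 : [set j : 'I_n | cnt R j == v] = set0.
      apply/setP => j; rewrite !inE; apply/negP => /eqP E.
      by move: (cntlt j); rewrite E ltnNge Hv.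
    by rewrite E1 E2.
  apply/ffunP => j; rewrite ffunE; apply: val_inj => /=.
  have E : forall v, (f j < v)%N = (cnt R j < v)%N.
    move=> v; rewrite (downset Hmono) (downset (g := fun j : 'I_n => cnt R j)) ?Hc //.
    by move=> i k ik; apply: cnt_mono.
  apply/eqP; rewrite eqn_leq -ltnS E ltnS leqnn /= -ltnS -E ltnS leqnn //.
have F0A : (F0 \in A) = (V \subset R).
  rewrite inE; apply/idP/idP.
    case/and3P => _ /forallP Hs _; apply/subsetP => j jV.
    have j0 : (0 < val j)%N by move: (subsetP HV j jV); rewrite inE.
    have Hj1 : ((val j).-1 < n)%N by apply: leq_ltn_trans (leq_pred _) (ltn_ord j).
    move: (Hs (Ordinal Hj1)) => /forallP /(_ j); rewrite jV /= prednK // eqxx /= !ffunE /=.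
    by rewrite -(prednK j0) cntS prednK // inS_val; case: (j \in R); rewrite ?addn0 ?ltnn.
  move=> VR; apply/and3P; split.
  - apply/forallP => i; apply/forallP => j; apply/implyP => ij; rewrite !ffunE /=.
    exact: cnt_mono.
  - apply/forallP => i; apply/forallP => j; apply/implyP => /andP [/eqP ij jV].
    by rewrite !ffunE /= ij cntS -ij inS_val (subsetP VR j jV) addn1.
  - apply/forallP => v; rewrite -fib0 //; apply/eqP; apply: eq_card => j.
    by rewrite !inE ffunE.
case: (boolP (V \subset R)) => VR.
  have HA : A =i pred1 F0.
    move=> f; rewrite [in RHS]inE; apply/idP/eqP => [/key //|->]; by rewrite F0A.
  by rewrite (eq_card HA) card1.
have HA : A =i pred0.
  move=> f; rewrite [in RHS]inE; apply/negP => /[dup] /key ->; by rewrite F0A (negbTE VR).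
by rewrite (eq_card HA) card0.
Qed.

End Comb.

Section Mob.
Variable n : nat.
Implicit Types (T R S U : {set 'I_n}).
Local Open Scope ring_scope.

Lemma setDD_posI (T : {set 'I_n}) : T \subset posI n -> posI n :\: (posI n :\: T) = T.
Proof. by move=> HT; rewrite setDDr setDv set0U; apply/setIidPr. Qed.

Lemma reindex_compl (F : {set 'I_n} -> int) :
  \sum_(U : {set 'I_n} | U \subset posI n) F U = \sum_(T : {set 'I_n} | T \subset posI n) F (posI n :\: T).
Proof.
rewrite (reindex_onto (fun T => posI n :\: T) (fun T => posI n :\: T)); last first.
  by move=> U HU; rewrite setDD_posI.
apply: eq_bigl => T; rewrite subsetDl /=.
apply/eqP/idP => [<-|HT]; first by rewrite subsetDl.
by rewrite setDD_posI.
Qed.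

Lemma mobius (c d : {set 'I_n} -> int) :
  (forall R, R \subset posI n ->
     \sum_(U : {set 'I_n} | U \subset posI n) d U * Posz (posI n :\: U \subset R) =
     \sum_(T : {set 'I_n} | T \subset posI n) c T * Posz (T \subset R)) ->
  forall T, T \subset posI n -> c T = d (posI n :\: T).
Proof.
move=> H.
pose e T := d (posI n :\: T) - c T.
have He : forall R, R \subset posI n ->
    \sum_(T : {set 'I_n} | T \subset posI n) e T * Posz (T \subset R) = 0.
  move=> R HR; move: (H R HR); rewrite reindex_compl => E.
  rewrite /e (eq_bigr (fun T => d (posI n :\: T) * Posz (T \subset R) - c T * Posz (T \subset R))).
    rewrite sumrB -E; apply/eqP; rewrite subr_eq0; apply/eqP; apply: eq_bigr => T HT.
    by rewrite setDD_posI.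
  by move=> T _; rewrite mulrBl.
suff : forall k T, (#|T| <= k)%N -> T \subset posI n -> e T = 0.
  by move=> Hk T HT; apply/eqP; rewrite eq_sym -subr_eq0; apply/eqP; apply: (Hk #|T|).
elim=> [|k IH] T HTk HT.
  move: (He T HT); rewrite (bigD1 T) //= subxx mulr1 big1 ?addr0 //.
  move=> T' /andP [_ T'T]; case: (boolP (T' \subset T)) => [sT|]; last by rewrite mulr0.
  exfalso; move: HTk; rewrite leqn0 cards_eq0 => /eqP T0.
  by move: sT T'T; rewrite T0 subset0 => /eqP ->; rewrite eqxx.
move: (He T HT); rewrite (bigD1 T) //= subxx mulr1 big1 ?addr0 //.
move=> T' /andP [HT' T'T]; case: (boolP (T' \subset T)) => [sT|]; last by rewrite mulr0.
rewrite IH ?mul0r //.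
have : T' \proper T by rewrite properEneq T'T sT.
by move/proper_card => Hc; rewrite -ltnS (leq_trans Hc HTk).
Qed.

Lemma sum_flip (c d : {set 'I_n} -> int) (S : {set 'I_n}) :
  S \subset posI n ->
  (forall T, T \subset posI n -> c T = d (posI n :\: T)) ->
  \sum_(T : {set 'I_n} | T \subset posI n) c T * Posz (posI n :\: S \subset T) =
  \sum_(U : {set 'I_n} | U \subset posI n) d U * Posz (U \subset S).
Proof.
move=> HS Hcd; rewrite [RHS]reindex_compl; apply: eq_bigr => T HT.
have Hb : (posI n :\: S \subset T) = (posI n :\: T \subset S).
  apply/idP/idP => H.
    apply/subsetP => x; rewrite !inE => /andP [xT xP]; apply: contraT => xS.
    by move/subsetP: H => /(_ x); rewrite !inE xS xP (negbTE xT) => /(_ isT).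
  apply/subsetP => x; rewrite !inE => /andP [xS xP]; apply: contraT => xT.
  by move/subsetP: H => /(_ x); rewrite !inE xT xP (negbTE xS) => /(_ isT).
by rewrite Hcd // Hb.
Qed.

End Mob.

Section SV.
Variables (n : nat) (S : {set 'I_n}).
Hypothesis Hn : (0 < n)%N.
Hypothesis HS : S \subset posI n.

Definition sv i := #|[set j : 'I_n | (cnt S j < i)%N]|.

Lemma sv0 : sv 0 = 0%N.
Proof. by apply/eqP; rewrite cards_eq0; apply/eqP/setP => j; rewrite !inE ltn0. Qed.

Lemma svS i : (i < size (rcomp S))%N -> sv i.+1 = (sv i + nth 0 (rcomp S) i)%N.
Proof. by move=> Hi; rewrite /sv card_split nth_comp // -size_comp. Qed.

Lemma sv_le i : (sv i <= n)%N.
Proof. by apply: leq_trans (max_card _) _; rewrite card_ord. Qed.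

Lemma sv_top : sv #|S|.+1 = n.
Proof.
rewrite /sv -[RHS](card_ord n); apply: eq_card => j; rewrite !inE ltnS cnt_le //.
Qed.

Lemma sv_mono i k : (i <= k)%N -> (sv i <= sv k)%N.
Proof.
move=> ik; apply: subset_leq_card; apply/subsetP => j; rewrite !inE => H.
exact: leq_trans H ik.
Qed.

Lemma cnt_mono_ord : forall i j : 'I_n, (val i <= val j)%N -> (cnt S i <= cnt S j)%N.
Proof. by move=> i j ij; apply: cnt_mono. Qed.

Lemma sv_lt i : (i <= #|S|)%N -> (sv i < n)%N.
Proof.
move=> Hi; have Hn1 : (n.-1 < n)%N by lia.
have := downset cnt_mono_ord (Ordinal Hn1) i; rewrite /= cnt_last //.
rewrite ltnNge Hi /= => /esym /negbT; rewrite -leqNgt -/(sv i) => H.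
exact: leq_ltn_trans H Hn1.
Qed.

Lemma sv_inS i : (0 < i <= #|S|)%N -> exists2 o : 'I_n, o \in S & val o = sv i.
Proof.
case/andP => i0 iS.
have Hq := sv_lt iS.
have q0 : (0 < sv i)%N.
  have := downset cnt_mono_ord (Ordinal Hn) i; rewrite /= cnt0 // i0 -/(sv i).
  by move/esym.
have Hq1 : ((sv i).-1 < n)%N by lia.
have A1 := downset cnt_mono_ord (Ordinal Hq) i; rewrite /= ltnn -/(sv i) in A1.
have A2 := downset cnt_mono_ord (Ordinal Hq1) i; rewrite /= -/(sv i) in A2.
have : ((sv i).-1 < sv i)%N by lia.
rewrite -A2 => A2'.
move: A1; rewrite -(prednK q0) cntS prednK //.
case E: (inS S (sv i)).
  by move: E => /existsP [o /andP [oS /eqP oq]]; exists o.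
by rewrite addn0 A2'.
Qed.

End SV.

Section Main.
Local Open Scope order_scope.
Context {disp : Order.disp_t} {P : finTBPOrderType disp}.
Variables (n : nat) (rk : P -> nat) (U : nat -> {set P} -> {set P}) (S : {set 'I_n}).
Hypothesis Hgr : graded_rank rk n.
Hypothesis Hn : (0 < n)%N.
Hypothesis HS : S \subset posI n.
Hypothesis HU1 : forall i m, (0 < i < n)%N -> maxchainb m -> maxchainb (U i m).
Hypothesis HU2 : forall i m x, (0 < i < n)%N -> maxchainb m -> rk x != i ->
        (x \in U i m) = (x \in m).
Hypothesis HU3 : forall i m, (0 < i < n)%N -> maxchainb m -> U i (U i m) = U i m.
Hypothesis HU4 : forall i j m, (0 < i < n)%N -> (0 < j < n)%N ->
        ((i.+2 <= j)%N || (j.+2 <= i)%N) -> maxchainb m ->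
        U i (U j m) = U j (U i m).
Hypothesis HU5 : forall i m, (0 < i)%N -> (i.+1 < n)%N -> maxchainb m ->
        U i (U i.+1 (U i m)) = U i.+1 (U i (U i.+1 m)).

Definition inJ j := (0 < j < n)%N && ~~ inS S j.
Lemma inJ_bnd j : inJ j -> (0 < j < n)%N.
Proof. by case/andP. Qed.

Definition e := Uword U (W inJ n.-1).

Lemma e_max m : maxchainb m -> maxchainb (e m).
Proof. by move=> Hm; apply: (Uword_D HU1) => //; exact: (W_bounds inJ_bnd). Qed.

Lemma e_fix m j : maxchainb m -> inJ j -> U j (e m) = e m.
Proof.
move=> Hm Hj; apply: (W_absorb HU1 HU3 HU4 HU5 inJ_bnd) => //.
by case/andP: (inJ_bnd Hj) => _; lia.
Qed.

Lemma word_id w m : (forall l, l \in w -> U l m = m) -> Uword U w m = m.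
Proof.
elim: w => // l w IH H; rewrite Uword_cons IH ?H ?mem_head //.
by move=> l' l'w; apply: H; rewrite in_cons l'w orbT.
Qed.

Lemma e_id m : (forall j, inJ j -> U j m = m) -> e m = m.
Proof.
move=> H; apply: word_id => l lw; apply: H.
exact: (allP (W_letters inJ_bnd n.-1)).
Qed.

Lemma word_mem w m x : maxchainb m -> all (fun i => (0 < i < n)%N) w ->
  (forall l, l \in w -> rk x != l) -> (x \in Uword U w m) = (x \in m).
Proof.
move=> Hm; elim: w => // l w IH /andP [Hl Hw] Hx.
rewrite Uword_cons HU2 //.
  by apply: IH => // l' l'w; apply: Hx; rewrite in_cons l'w orbT.
  by apply: (Uword_D HU1).
by apply: Hx; rewrite mem_head.
Qed.

Lemma e_mem m x : maxchainb m -> ~~ inJ (rk x) -> (x \in e m) = (x \in m).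
Proof.
move=> Hm Hx; apply: word_mem => //; first by exact: (W_bounds inJ_bnd).
move=> l lw; apply/eqP => E; move: Hx; rewrite E.
by rewrite (allP (W_letters inJ_bnd n.-1)).
Qed.

Lemma descP m : (descents n U m \subset S) <-> (forall j, inJ j -> U j m = m).
Proof.
split.
  move=> /subsetP H j /andP [/andP [j0 jn] jS]; apply/eqP; apply: contraT => Hj.
  have := H (Ordinal jn); rewrite inE /= j0 Hj => /(_ isT) oS.
  by move: jS; rewrite /inS; case/negP; apply/existsP; exists (Ordinal jn); rewrite oS eqxx.
move=> H; apply/subsetP => i; rewrite inE => /andP [i0 Hi]; apply: contraT => iS.
move: Hi; rewrite H ?eqxx //; rewrite /inJ i0 ltn_ord /= inS_val //.
Qed.

Definition TS := [set t : {ffun 'I_(size (rcomp S)).+1 -> P} |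
     [&& 0 < size (rcomp S),
         t ord0 == \bot,
         t ord_max == \top,
         [forall i : 'I_(size (rcomp S)),
            (t (widen_ord (leqnSn _) i) <= t (lift ord0 i)) &&
            (rk (t (lift ord0 i)) == rk (t (widen_ord (leqnSn _) i)) + nth 0 (rcomp S) i)%N] &
         (t (inord (size (rcomp S)).-1) < t ord_max)]].

Lemma F_TS : F_coef rk (rcomp S) = #|TS|.
Proof. by []. Qed.

Definition rho (m : {set P}) : {ffun 'I_(size (rcomp S)).+1 -> P} :=
  [ffun i : 'I_(size (rcomp S)).+1 => elt rk m (sv S i)].

Lemma rk_bot : rk \bot = 0%N. Proof. by case: Hgr. Qed.
Lemma rk_top : rk \top = n. Proof. by case: Hgr. Qed.

Lemma rho_TS m : maxchainb m -> rho m \in TS.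
Proof.
move=> Hm; have Hc : chainb m by case/andP: Hm.
have EL := fun k => eltP Hgr Hm (sv_le S k).
rewrite inE; apply/and5P; split.
- by rewrite size_comp.
- rewrite ffunE /= sv0; apply/eqP.
  by have := elt_eq Hgr Hm (maxchain_bot Hm); rewrite rk_bot.
- have Eo : nat_of_ord (ord_max : 'I_(size (rcomp S)).+1) = #|S|.+1 by apply: size_comp.
  rewrite ffunE Eo sv_top; apply/eqP.
  by have := elt_eq Hgr Hm (maxchain_top Hm); rewrite rk_top.
- apply/forallP => i; rewrite !ffunE /=; apply/andP; split.
    apply: (chain_le_rk Hgr Hc (EL _).1 (EL _).1).
    by rewrite (EL _).2 (EL _).2; apply: sv_mono.
  by rewrite (EL _).2 (EL _).2 svS.
- have Eo : nat_of_ord (ord_max : 'I_(size (rcomp S)).+1) = #|S|.+1 by apply: size_comp.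
  have Ei : nat_of_ord (inord (size (rcomp S)).-1 : 'I_(size (rcomp S)).+1) = #|S|.
    by rewrite inordK size_comp.
  rewrite !ffunE Eo Ei sv_top; rewrite lt_neqAle; apply/andP; split.
    apply/eqP => E; have := (EL #|S|).2; rewrite E (eltP Hgr Hm (leqnn n)).2 => E'.
    by move: (sv_lt Hn HS (leqnn #|S|)); rewrite -E' ltnn.
  apply: (chain_le_rk Hgr Hc (EL _).1 (eltP Hgr Hm (leqnn n)).1).
  by rewrite (EL _).2 (eltP Hgr Hm (leqnn n)).2 sv_le.
Qed.

Lemma TS_rk t : t \in TS -> forall k, (k < (size (rcomp S)).+1)%N ->
  rk (t (inord k)) = sv S k.
Proof.
rewrite inE => /and5P [_ /eqP t0 _ /forallP Ht _].
elim=> [|k IH] Hk.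
  have -> : inord 0 = ord0 :> 'I_(size (rcomp S)).+1 by apply: val_inj; rewrite /= inordK.
  by rewrite t0 rk_bot sv0.
have Hk' : (k < size (rcomp S))%N by [].
move: (Ht (Ordinal Hk')) => /andP [_ /eqP].
have -> : lift ord0 (Ordinal Hk') = inord k.+1 :> 'I_(size (rcomp S)).+1.
  by apply: val_inj; rewrite /= inordK.
have -> : widen_ord (leqnSn _) (Ordinal Hk') = inord k :> 'I_(size (rcomp S)).+1.
  by apply: val_inj; rewrite /= inordK // ltnW.
by move=> ->; rewrite IH ?(ltnW Hk) // svS.
Qed.

Lemma TS_le t : t \in TS -> forall k l, (k <= l)%N -> (l < (size (rcomp S)).+1)%N ->
  t (inord k) <= t (inord l).
Proof.
move=> Ht0; have := Ht0; rewrite inE => /and5P [_ _ _ /forallP Ht _].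
move=> k; elim=> [|l IH] kl Hl.
  by move: kl; rewrite leqn0 => /eqP ->.
case: (ltngtP k l.+1) => [Hkl|Hkl|->]; last by [].
  have Hl' : (l < size (rcomp S))%N by [].
  move: (Ht (Ordinal Hl')) => /andP [H _].
  have E1 : lift ord0 (Ordinal Hl') = inord l.+1 :> 'I_(size (rcomp S)).+1.
    by apply: val_inj; rewrite /= inordK.
  have E2 : widen_ord (leqnSn _) (Ordinal Hl') = inord l :> 'I_(size (rcomp S)).+1.
    by apply: val_inj; rewrite /= inordK // ltnW.
  rewrite E1 E2 in H; apply: le_trans H; apply: IH; first by rewrite -ltnS.
  exact: ltnW.
by move: kl; rewrite leqNgt Hkl.
Qed.

Lemma notJ_sv k : (k <= #|S|.+1)%N -> ~~ inJ (sv S k).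
Proof.
move=> Hk; rewrite /inJ negb_and.
case: k Hk => [|k] Hk; first by rewrite sv0.
case: (ltngtP k #|S|) => [Hlt|Hgt|->].
- have [o oS Eo] := sv_inS Hn HS (i := k.+1) Hlt.
  by rewrite -Eo inS_val oS orbT.
- by move: Hk; rewrite ltnS leqNgt Hgt.
- by rewrite sv_top ltnn andbF.
Qed.

Definition Fset := [set m | maxchainb m & descents n U m \subset S].

Lemma TS_surj t : t \in TS -> exists2 m, m \in Fset & rho m = t.
Proof.
move=> Ht.
set C := [set t i | i : 'I_(size (rcomp S)).+1].
have HC : chainb C.
  apply/forallP => x; apply/implyP => /imsetP [i _ ->].
  apply/forallP => y; apply/implyP => /imsetP [j _ ->].
  rewrite -(inord_val i) -(inord_val j).
  case: (leqP i j) => ij.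
    by apply/orP; left; apply: TS_le; rewrite ?inordK.
  by apply/orP; right; apply: TS_le; rewrite ?inordK // ltnW.
have [m0 /andP [Hm0 Cm0]] := extend_chain HC.
exists (e m0).
  rewrite inE e_max //=; apply/descP => j Hj; exact: e_fix.
apply/ffunP => i; rewrite ffunE.
have Hrk : rk (t i) = sv S i by rewrite -{1}(inord_val i) TS_rk.
rewrite -Hrk (elt_eq Hgr) //; first exact: e_max.
rewrite e_mem //; first by apply: (subsetP Cm0); apply: imset_f.
rewrite Hrk notJ_sv //; apply: (@leq_trans (size (rcomp S))); first by rewrite -ltnS ltn_ord.
by rewrite size_comp.
Qed.

Lemma rho_inj : #|Fset| = #|TS| -> {in Fset &, injective rho}.
Proof.
move=> Hc; apply/imset_injP.
have -> : rho @: Fset = TS.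
  apply/setP => t; apply/idP/idP.
    by case/imsetP => m; rewrite inE => /andP [Hm _] ->; apply: rho_TS.
  by case/TS_surj => m mF <-; apply: imset_f.
by rewrite Hc.
Qed.

Lemma c_notJ c x : rankset n rk c = S -> x \in c -> ~~ inJ (rk x).
Proof.
move=> Hrs xc; case: (eqVneq x \bot) => [->|xb]; first by rewrite rk_bot.
case: (eqVneq x \top) => [->|xt]; first by rewrite rk_top /inJ ltnn andbF.
have Hx : (rk x < n)%N.
  by rewrite -rk_top; apply: (rk_lt Hgr); rewrite lt_neqAle xt lex1.
have : Ordinal Hx \in rankset n rk c.
  by rewrite inE; apply/existsP; exists x; rewrite xc xb xt /=.
rewrite Hrs => oS; rewrite /inJ negb_and; have := inS_val S (Ordinal Hx); rewrite /= => ->; by rewrite oS orbT.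
Qed.

Lemma main_exist c : chainb c -> rankset n rk c = S -> exists2 m, m \in Fset & c \subset m.
Proof.
move=> Hc Hrs; have [m0 /andP [Hm0 cm0]] := extend_chain Hc.
exists (e m0).
  rewrite inE e_max //=; apply/descP => j Hj; exact: e_fix.
apply/subsetP => x xc; rewrite e_mem //; first exact: (subsetP cm0).
exact: c_notJ xc.
Qed.

Lemma main_unique c m1 m2 : #|Fset| = #|TS| -> rankset n rk c = S ->
  m1 \in Fset -> m2 \in Fset -> c \subset m1 -> c \subset m2 -> m1 = m2.
Proof.
move=> Hcard Hrs H1 H2 c1 c2; apply: (rho_inj Hcard) => //.
have Hm1 : maxchainb m1 by move: H1; rewrite inE => /andP [].
have Hm2 : maxchainb m2 by move: H2; rewrite inE => /andP [].
apply/ffunP => i; rewrite !ffunE.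
suff [x [x1 x2 rx]] : exists x, [/\ x \in m1, x \in m2 & rk x = sv S i].
  by rewrite -rx (elt_eq Hgr Hm1 x1) (elt_eq Hgr Hm2 x2).
have Hi : (i <= #|S|.+1)%N.
  apply: (@leq_trans (size (rcomp S))); first by rewrite -ltnS ltn_ord.
  exact: eq_leq (size_comp S).
case: (posnP i) => [i0|ipos].
  by exists \bot; rewrite !maxchain_bot // rk_bot i0 sv0.
case: (ltngtP i #|S|.+1) => [Hlt|Hgt|Heq].
- have [o oS Eo] := sv_inS Hn HS (i := i) (introT andP (conj ipos Hlt)).
  have : o \in rankset n rk c by rewrite Hrs.
  rewrite inE => /existsP [x /and4P [xc _ _ /eqP rx]].
  by exists x; rewrite (subsetP c1 _ xc) (subsetP c2 _ xc) rx Eo.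
- by move: Hi; rewrite leqNgt Hgt.
- by exists \top; rewrite !maxchain_top // rk_top Heq sv_top.
Qed.

Lemma prod_ifs (p : pred nat) (w : seq nat) :
  (\prod_(i <- w) (if p i then (-1)%R else 0%R) : int) =
  (if all p w then (-1) ^+ size w else 0)%R.
Proof.
elim: w => [|i w IH]; first by rewrite big_nil.
rewrite big_cons IH /=; case: (p i); last by rewrite mul0r.
by case: (all p w); rewrite ?mulr0 // exprS.
Qed.

Lemma count_eq (cc dd : {set 'I_n} -> int) :
  (forall w : seq nat, all (fun i => (0 < i < n)%N) w ->
    chiP U w = (\sum_(T : {set 'I_n} | T \subset posI n) cc T * chiS T w)%R) ->
  (forall a : seq nat, last 1%N a != 0%N ->
    (Posz (F_coef rk a)) =
    (\sum_(T : {set 'I_n} | T \subset posI n) dd T * (Posz (L_coef T a)))%R) ->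
  (forall a : seq nat, last 1%N a != 0%N ->
    (\sum_(T : {set 'I_n} | T \subset posI n) dd T * (Posz (L_coef (L_compl T) a)))%R =
    (\sum_(T : {set 'I_n} | T \subset posI n) cc T * (Posz (L_coef T a)))%R) ->
  #|Fset| = #|TS|.
Proof.
move=> Hchi HF Hom.
set Wn := W inJ n.-1.
have HWb : all (fun i => (0 < i < n)%N) Wn by exact: (W_bounds inJ_bnd).
have Efix : [set m in (maxchains : {set {set P}}) | Uword U Wn m == m] = Fset.
  apply/setP => m; rewrite !inE; case Hm: (maxchainb m) => //=.
  apply/eqP/idP => [Hem|].
    apply/descP => j Hj; rewrite -Hem; exact: e_fix.
  by move/descP => H; apply: e_id.
pose X := posI n :\: S.
have Hall : forall T : {set 'I_n}, all (fun i => [exists j in T, val j == i]) Wn = (X \subset T).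
  move=> T; apply/allP/subsetP => [H x|H i iW].
    rewrite inE => /andP [xS xP].
    have Hx : inJ x.
      by rewrite /inJ inS_val xS andbT; move: xP; rewrite inE => ->; rewrite ltn_ord.
    have xn : (x <= n.-1)%N by move: (ltn_ord x); lia.
    case/existsP: (H _ (W_all inJ_bnd Hx xn)) => j /andP [jT /eqP jx].
    by have <- : j = x by apply: val_inj.
  have [/andP [i0 iN] iS] := andP (allP (W_letters inJ_bnd n.-1) i iW).
  apply/existsP; exists (Ordinal iN); rewrite eqxx andbT; apply: H.
  by rewrite !inE /= i0 andbT -(inS_val S (Ordinal iN)).
have Hcnt : Posz #|Fset| = (\sum_(T : {set 'I_n} | T \subset posI n) cc T * Posz (X \subset T))%R.
  move: (Hchi Wn HWb); rewrite /chiP Efix.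
  rewrite (eq_bigr (fun T => (-1) ^+ size Wn * (cc T * Posz (X \subset T))))%R; last first.
    move=> T _; rewrite /chiS prod_ifs Hall; case: (X \subset T) => /=.
      by rewrite mulr1 mulrC.
    by rewrite !mulr0.
  by rewrite -big_distrr /=; move/(can_inj (signrMK _)).
have Hcd : forall T : {set 'I_n}, T \subset posI n -> cc T = dd (posI n :\: T).
  apply: mobius => R HR; move: (Hom (rcomp R) (last_comp R Hn)) => E.
  rewrite -[LHS](eq_bigr _ (fun (T : {set 'I_n}) HT => congr1 (fun k => dd T * Posz k)%R (L_comp Hn (subsetDl _ _) HR))).
  rewrite -[RHS](eq_bigr _ (fun (T : {set 'I_n}) HT => congr1 (fun k => cc T * Posz k)%R (L_comp Hn HT HR))).
  exact: E.
have HFS := HF (rcomp S) (last_comp S Hn).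
rewrite (eq_bigr _ (fun (T : {set 'I_n}) HT => congr1 (fun k => dd T * Posz k)%R (L_comp Hn HT HS))) in HFS.
rewrite -(sum_flip HS Hcd) -Hcnt -/X in HFS.
by rewrite -F_TS; case: HFS.
Qed.

End Main.

Theorem mainTheorem14 (disp : Order.disp_t) (P : finTBPOrderType disp)
  (n : nat) (rk : P -> nat) (U : nat -> {set P} -> {set P})
  (Hgr : graded_rank rk n) (Hbt : bowtie_free (P := P))
  (Hgood : good_action n rk U) (S : {set 'I_n}) (HS : S \subset posI n) :
  forall c : {set P}, chainb c -> rankset n rk c = S ->
    exists! m : {set P},
      [/\ maxchainb m, c \subset m & descents n U m \subset S].
Proof.
move=> c Hc Hrs.
case: Hgood => [[HU1 HU2 HU3 HU4 HU5] [cc [dd [Hchi HF Hom]]]].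
case: (posnP n) => [n0|Hn].
  have Hall : forall x : P, x = (\bot)%O.
    move=> x; apply/eqP; rewrite eq_sym; apply: contraT => xb.
    have : (\bot < x)%O by rewrite lt_neqAle xb le0x.
    move/(rk_lt Hgr); rewrite (rk_bot Hgr) ltnNge.
    by have := rk_bound Hgr x; rewrite n0 leqn0 => /eqP ->.
  have Hd : forall m : {set P}, descents n U m \subset S.
    move=> m; apply/subsetP => i; exfalso; move: (ltn_ord i); move: (nat_of_ord i) => k.
    by rewrite n0.
  have [m0 /andP [Hm0 cm0]] := extend_chain Hc.
  exists m0; split; first by split.
  move=> m' [Hm' _ _]; apply/setP => x; rewrite (Hall x).
  by rewrite !maxchain_bot.
have Hcard := count_eq Hn HS HU1 HU3 HU4 HU5 Hchi HF Hom.
have [m mF cm] := main_exist Hgr Hn HS HU1 HU2 HU3 HU4 HU5 Hc Hrs.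
have [Hm Hd] : maxchainb m /\ descents n U m \subset S by move: mF; rewrite inE => /andP.
exists m; split; first by split.
move=> m' [Hm' cm' Hd']; apply: (main_unique Hgr Hn HS HU1 HU2 HU3 HU4 HU5 Hcard Hrs mF _ cm cm').
by rewrite inE Hm' Hd'.
Qed.
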